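(* Suppose every IDR of the system $\mathcal{I}(E,\mathcal{F}(E))$ is of Restricted Case I form, and let $E'\subsetneq E$. Then for any two distinct entities $e_i\neq e_j$ in $E$, exactly one of the following holds or more than one holds: (a) $PS(e_i\mid E')\subseteq PS(e_j\mid E')$, (b) $PS(e_j\mid E')\subseteq PS(e_i\mid E')$, (c) $PS(e_i\mid E')\cap PS(e_j\mid E')=\emptyset$; that is, at least one of (a), (b), (c) holds.
   Context: A system $\mathcal{I}(E,\mathcal{F}(E))$ consists of a finite set $E$ of entities, $n=|E|$, and a set $\mathcal{F}(E)$ of interdependency relations (IDRs). Each entity $e$ has at most one IDR, of the form $e\leftarrow \sum_{i=1}^{m}\prod_{x\in s_i}x$ (a disjunction of conjunctions), where each minterm $s_i$ is a nonempty subset of $E$; it means $e$ is operational only if for at least one minterm all entities of that minterm are operational. Entities without an IDR can only fail initially. Failure dynamics: given an initially failing set $E'\subseteq E$ and a set $H\subseteq E$ of hardened entities (hardened entities never fail), put $F_0=E'\setminus H$ and $F_{t+1}=F_t\cup\{e\in E\setminus H: e \text{ has an IDR and every minterm of it contains an element of } F_t\}$; the final failed set is $F(E',H):=F_{n-1}$. $\mathrm{KillSet}(E'):=F(E',\emptyset)$. Protection set: $PS(H\mid E'):=\mathrm{KillSet}(E')\setminus F(E',H)$, and $PS(e\mid E'):=PS(\{e\}\mid E')$. Restricted Case I: every IDR consists of a single minterm of size one, i.e. has the form $e_i\leftarrow e_j$ with $e_j\in E$. *)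

(* Defs.v *)
From mathcomp Require Import ssreflect ssrfun ssrbool eqtype ssrnat seq choice fintype finset.
Set Implicit Arguments. Unset Strict Implicit. Unset Printing Implicit Defensive.

(* A system I(E, F(E)): entities form a finite type E; each entity has at most
   one IDR, given as a list of minterms (each a nonempty set of entities),
   read as the disjunction of the conjunctions of the minterms. *)
Record system (E : finType) := System {
  idr : E -> option (seq {set E});
  idr_minterm_nonempty : forall e ms, idr e = Some ms ->
                           forall s, s \in ms -> s != set0
}.

Definition step (E : finType) (S : system E) (H F : {set E}) : {set E} :=
  F :|: [set e | (e \notin H) &&
                 (if idr S e is Some ms then all (fun s : {set E} => [exists x in s, x \in F]) ms
                  else false)].

Definition Fseq (E : finType) (S : system E) (E' H : {set E}) (t : nat) : {set E} :=
  iter t (step S H) (E' :\: H).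

Definition Ffinal (E : finType) (S : system E) (E' H : {set E}) : {set E} :=
  Fseq S E' H (#|E|.-1).

Definition KillSet (E : finType) (S : system E) (E' : {set E}) : {set E} :=
  Ffinal S E' set0.

Definition PS (E : finType) (S : system E) (H E' : {set E}) : {set E} :=
  KillSet S E' :\: Ffinal S E' H.

Definition PS1 (E : finType) (S : system E) (e : E) (E' : {set E}) : {set E} :=
  PS S [set e] E'.

Definition restricted_case_I (E : finType) (S : system E) : Prop :=
  forall e ms, idr S e = Some ms -> exists j : E, ms = [:: [set j]].

(* Main.v *)
Require Import Defs.
From mathcomp Require Import ssreflect ssrfun ssrbool eqtype ssrnat seq choice fintype finset.
From mathcomp Require Import zify.
Set Implicit Arguments. Unset Strict Implicit.

Section Aux.
Variables (E : finType) (S : system E) (E' : {set E}).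
Hypothesis hI : restricted_case_I S.

Definition pf (e : E) : E :=
  match idr S e with Some (s :: _) => odflt e [pick j in s] | _ => e end.

Lemma stepE H F x :
  (x \in step S H F) = (x \in F) || ((x \notin H) && (pf x \in F)).
Proof.
rewrite /step /pf inE inE.
case Hx: (idr S x) => [ms|]; last first.
  by case: (x \in F); rewrite ?andbF.
have [j Hj] := hI Hx; subst ms.
have -> : odflt x [pick j0 in [set j]] = j.
  by case: pickP => [k /set1P -> | /(_ j)]; rewrite ?set11.
rewrite /= andbT.
congr (_ || (_ && _)).
apply/existsP/idP => [[y /andP[/set1P -> //]] | hj].
by exists j; rewrite set11.
Qed.

Lemma FseqP H t x : x \in Fseq S E' H t <->
  exists k, k <= t /\ iter k pf x \in E' /\ forall i, i <= k -> iter i pf x \notin H.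
Proof.
elim: t x => [|t IH] x.
  rewrite /Fseq /= inE; split.
    by case/andP=> hH hE; exists 0; split=> //; split=> // i; rewrite leqn0 => /eqP ->.
  case=> k [hk [hE hH]]; move: hk; rewrite leqn0 => /eqP ?; subst k.
  by rewrite hE andbT; exact: (hH 0 (leqnn 0)).
rewrite /Fseq iterS -/(Fseq S E' H t) stepE; split.
  case/orP => [/IH [k [hk rest]] | /andP [hH /IH [k [hk [hE hA]]]]].
    by exists k; split=> //; apply: leq_trans hk _.
  exists k.+1; split => //; rewrite iterSr; split=> // [[|i]] hi //.
  by rewrite iterSr; apply: hA.
case=> [[|k]] [hk [hE hA]].
  by apply/orP; left; apply/IH; exists 0; split.
apply/orP; right; rewrite (hA 0 isT) /=; apply/IH; exists k; split=> //.
split; first by rewrite -iterSr.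
by move=> i hi; rewrite -iterSr; apply: hA.
Qed.

Definition minw x k := iter k pf x \in E' /\ forall i, i < k -> iter i pf x \notin E'.

Lemma minw_uniq x k1 k2 : minw x k1 -> minw x k2 -> k1 = k2.
Proof.
case=> h1 m1 [h2 m2]; case: (ltngtP k1 k2) => // h.
  by move: (m2 _ h); rewrite h1.
by move: (m1 _ h); rewrite h2.
Qed.

Lemma minw_inj x k i j : minw x k -> i < j -> j <= k -> iter i pf x <> iter j pf x.
Proof.
case=> hk hm hij hjk heq.
have : iter (k - j + i) pf x \in E'.
  by rewrite iterD heq -iterD subnK.
by apply/negP; apply: hm; lia.
Qed.

Lemma finalP H x : x \in Ffinal S E' H <->
  exists k, minw x k /\ forall i, i <= k -> iter i pf x \notin H.
Proof.
rewrite /Ffinal FseqP; split.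
  case=> k [_ [hE hA]].
  have ex : exists k, iter k pf x \in E' by exists k.
  case: (ex_minnP ex) => k0 h0 hmin.
  exists k0; split.
    split=> // i hi; apply/negP => hi'.
    by move: (hmin i hi'); rewrite leqNgt hi.
  by move=> i hi; apply: hA; apply: leq_trans hi (hmin _ hE).
case=> k [hw hA]; exists k; split; last by case: hw.
pose f := fun i : 'I_k.+1 => iter i pf x.
have finj : injective f.
  move=> i j; rewrite /f => heq; apply/val_inj => /=.
  case: (ltngtP i j) => // h.
    by case: (minw_inj hw h _ heq); rewrite -ltnS.
  by case: (minw_inj hw h _ (esym heq)); rewrite -ltnS.
have := @leq_card _ _ f finj; rewrite card_ord; case: #|E| => //.
Qed.

Lemma PS1P e x : x \in PS1 S e E' <->
  exists k, minw x k /\ exists2 i, i <= k & iter i pf x = e.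
Proof.
rewrite /PS1 /PS inE /KillSet; split.
  case/andP=> hn /finalP [k [hw _]]; exists k; split=> //.
  have [/existsP [i /eqP hi] | hne] := boolP [exists i : 'I_k.+1, iter i pf x == e].
    by exists i; rewrite // -ltnS.
  exfalso; move/negP: hn; apply; apply/finalP; exists k; split=> // i hi.
  apply/set1P => hie; move/negP: hne; apply; apply/existsP.
  by exists (Ordinal (hi : i < k.+1)); apply/eqP.
case=> k [hw [i hi hie]]; apply/andP; split.
  apply/negP => /finalP [k' [hw' hA]].
  rewrite -(minw_uniq hw hw') in hA.
  by move: (hA _ hi); rewrite hie set11.
by apply/finalP; exists k; split=> // j _; rewrite inE.
Qed.

Lemma incl x k a b e1 e2 : minw x k -> a <= b -> b <= k ->
  iter a pf x = e1 -> iter b pf x = e2 -> PS1 S e1 E' \subset PS1 S e2 E'.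
Proof.
move=> hw hab hbk ha hb; apply/subsetP => y /PS1P [ky [hwy [c hc hy]]].
have key : forall d, iter (d + c) pf y = iter (d + a) pf x.
  by move=> d; rewrite !iterD hy ha.
apply/PS1P; exists ky; split=> //; exists (b - a + c).
  rewrite leqNgt; apply/negP => hlt.
  have : iter (ky - c + a) pf x \in E'.
    by rewrite -key subnK //; case: hwy.
  by apply/negP; case: hw => _; apply; lia.
by rewrite key subnK.
Qed.

End Aux.

Theorem theorem7 (E : finType) (S : system E) (E' : {set E})
    (hI : restricted_case_I S) (hE' : E' \proper [set: E])
    (ei ej : E) (hij : ei != ej) :
  PS1 S ei E' \subset PS1 S ej E' \/
  PS1 S ej E' \subset PS1 S ei E' \/
  [disjoint PS1 S ei E' & PS1 S ej E'].
Proof.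
have [h0 | [x /setIP [xi xj]]] := set_0Vmem (PS1 S ei E' :&: PS1 S ej E').
  by right; right; rewrite -setI_eq0 h0.
case/(@PS1P _ _ E' hI _ _): xi => k [hw [a ha hai]].
case/(@PS1P _ _ E' hI _ _): xj => k' [hw' [b hb hbj]].
rewrite -(minw_uniq hw hw') in hb.
case: (leqP a b) => hab.
  by left; apply: (@incl _ _ E' hI _ _ _ _ _ _ hw hab hb hai hbj).
by right; left; apply: (@incl _ _ E' hI _ _ _ _ _ _ hw (ltnW hab) ha hbj hai).
Qed.
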